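(* Let an instance be given with $x_i,r_i\in\mathbb{N}$ for all $i=1,\dots,n$ and $L\in\mathbb{N}$, and suppose it admits a feasible solution. Then there exists a minimum-cost feasible solution $y$ with $y_i\in\mathbb{Z}$ for every $i$.
   Context: A solution is $y\in\mathbb{R}^n$; sensor $i$ at $y_i$ covers $[y_i-r_i,y_i+r_i]$; $y$ is feasible if $[0,L]\subseteq\bigcup_i[y_i-r_i,y_i+r_i]$; its cost is $\sum_i|y_i-x_i|$. *)

(* Defs.v *)
From Stdlib Require Import Reals List.
Open Scope R_scope.

(* An instance: n sensors, sensor i (0 <= i < n) has position x i and radius r i
   (natural numbers), and the segment to cover is [0, L].
   A solution is y : nat -> R, of which only the entries y 0, ..., y (n-1) matter. *)

Definition feasible (n : nat) (r : nat -> nat) (L : nat) (y : nat -> R) : Prop :=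
  forall t : R, 0 <= t <= INR L ->
    exists i : nat, (i < n)%nat /\ y i - INR (r i) <= t <= y i + INR (r i).

Definition cost (n : nat) (x : nat -> nat) (y : nat -> R) : R :=
  fold_right Rplus 0 (map (fun i => Rabs (y i - INR (x i))) (seq 0 n)).

(* Main.v *)
Require Import Defs.
From Stdlib Require Import Reals ZArith List Lia Lra Classical.
Open Scope R_scope.

Definition fl (v : R) : Z := (up v - 1)%Z.
Definition fr (v : R) : R := v - IZR (fl v).

Lemma fl_spec v : IZR (fl v) <= v < IZR (fl v) + 1.
Proof. unfold fl; rewrite minus_IZR; destruct (archimed v); simpl; lra. Qed.

Lemma fr_spec v : 0 <= fr v < 1 /\ v = IZR (fl v) + fr v.
Proof. unfold fr; destruct (fl_spec v); lra. Qed.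

Lemma fl_uniq z c : 0 <= c < 1 -> fl (IZR z + c) = z.
Proof.
  intros Hc. unfold fl. rewrite <- (tech_up (IZR z + c) (z + 1)).
  - lia.
  - rewrite plus_IZR; simpl; lra.
  - rewrite plus_IZR; simpl; lra.
Qed.

Lemma fr_uniq z c : 0 <= c < 1 -> fr (IZR z + c) = c.
Proof. intros Hc; unfold fr; rewrite fl_uniq; auto; ring. Qed.

Lemma zle0 (z : Z) a : a = IZR z -> a < 1 -> a <= 0.
Proof. intros -> H. apply lt_IZR in H. apply IZR_le. lia. Qed.
Lemma zge0 (z : Z) a : a = IZR z -> -1 < a -> 0 <= a.
Proof. intros -> H. apply (lt_IZR (-1)) in H. apply IZR_le. lia. Qed.
Lemma zlem1 (z : Z) a : a = IZR z -> a < 0 -> a <= -1.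
Proof. intros -> H. apply lt_IZR in H. apply (IZR_le _ (-1)). lia. Qed.
Lemma zge1 (z : Z) a : a = IZR z -> 0 < a -> 1 <= a.
Proof. intros -> H. apply lt_IZR in H. apply (IZR_le 1). lia. Qed.

Definition sumR (m n : nat) (F : nat -> R) : R := fold_right Rplus 0 (map F (seq m n)).

Lemma sum_lin n : forall m F G s d, (forall i, G i = F i + s i * d) ->
  sumR m n G = sumR m n F + sumR m n s * d.
Proof.
  induction n; intros m F G s d H; unfold sumR in *; simpl.
  - ring.
  - rewrite (IHn (S m) F G s d H), H. ring.
Qed.

Lemma sumR_nat n : forall m F, (forall i, exists k : nat, F i = INR k) ->
  exists N : nat, sumR m n F = INR N.
Proof.
  induction n; intros m F H; unfold sumR in *; simpl.
  - exists 0%nat; reflexivity.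
  - destruct (IHn (S m) F H) as [N HN]. destruct (H m) as [k Hk].
    exists (k + N)%nat. rewrite HN, Hk, plus_INR. reflexivity.
Qed.

Lemma maxl (g : nat -> R) n : exists m, 0 <= m /\ (m = 0 \/ exists i, (i < n)%nat /\ g i = m)
  /\ forall i, (i < n)%nat -> g i <= m.
Proof.
  induction n.
  - exists 0. split; [lra|split; [auto|intros; lia]].
  - destruct IHn as [m [H0 [H1 H2]]].
    destruct (Rle_dec m (g n)).
    + exists (g n). split; [lra| split; [right; exists n; split; [lia|auto]|]].
      intros i Hi. destruct (Nat.eq_dec i n); [subst; lra|]. specialize (H2 i ltac:(lia)); lra.
    + exists m. split; [lra|split].
      * destruct H1 as [|[i [Hi Hg]]]; [left; auto| right; exists i; split; [lia|auto]].
      * intros i Hi. destruct (Nat.eq_dec i n); [subst; lra|]. apply H2; lia.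
Qed.

Lemma up_term v f (X : Z) : fr v = f ->
  Rabs (v + (1 - f) - IZR X) = Rabs (v - IZR X) + (if Z_le_dec X (fl v) then 1 else -1) * (1 - f).
Proof.
  intros Hf. destruct (fr_spec v) as [Hr Hv]. rewrite Hf in Hr, Hv.
  destruct (Z_le_dec X (fl v)) as [Hl|Hl].
  - apply IZR_le in Hl. rewrite !Rabs_right by lra. ring.
  - assert (IZR (fl v) + 1 <= IZR X) by (rewrite <- (plus_IZR _ 1); apply IZR_le; lia).
    rewrite !Rabs_left1 by lra. ring.
Qed.

Lemma down_term v f f' (X : Z) : fr v = f -> 0 <= f' <= f ->
  Rabs (v - (f - f') - IZR X) = Rabs (v - IZR X) + (if Z_le_dec X (fl v) then 1 else -1) * (- (f - f')).
Proof.
  intros Hf Hf'. destruct (fr_spec v) as [Hr Hv]. rewrite Hf in Hr, Hv.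
  destruct (Z_le_dec X (fl v)) as [Hl|Hl].
  - apply IZR_le in Hl. rewrite !Rabs_right by lra. ring.
  - assert (IZR (fl v) + 1 <= IZR X) by (rewrite <- (plus_IZR _ 1); apply IZR_le; lia).
    rewrite !Rabs_left1 by lra. ring.
Qed.

Lemma t_facts t L : 0 <= t <= INR L ->
  0 <= IZR (fl t) /\ t = IZR (fl t) + fr t /\ 0 <= fr t < 1 /\
  (0 < fr t -> IZR (fl t) + 1 <= INR L).
Proof.
  intros Ht. destruct (fr_spec t) as [Hr Hv].
  split; [apply (zge0 (fl t)); [auto|lra]|split; [auto|split; [auto|]]].
  intros Hu. rewrite INR_IZR_INZ in *.
  assert (IZR (fl t) - IZR (Z.of_nat L) <= -1); [|lra].
  apply (zlem1 (fl t - Z.of_nat L)); [rewrite minus_IZR; auto|lra].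
Qed.

Lemma yint v (r : nat) : exists Y : Z, exists R0 : Z, v = IZR Y + fr v /\ INR r = IZR R0
  /\ 0 <= fr v < 1.
Proof.
  destruct (fr_spec v) as [H1 H2]. exists (fl v), (Z.of_nat r).
  split; [auto|split; [apply INR_IZR_INZ|auto]].
Qed.

Lemma up_feas n r L y f f' :
  0 <= f' < f -> f < 1 ->
  (forall i, (i < n)%nat -> fr (y i) = f \/ fr (y i) <= f') ->
  feasible n r L y ->
  feasible n r L (fun i => if Req_dec_T (fr (y i)) f then y i + (1 - f) else y i).
Proof.
  intros Hf Hf1 Hc Hfe t Ht.
  destruct (t_facts t L Ht) as [Hk [Htk [Hu HL]]].
  set (k := fl t) in *. set (u := fr t) in *.
  destruct (Rle_dec u f') as [Hu'|Hu'].
  - destruct (Hfe t Ht) as [j [Hj Hcov]]. exists j. split; auto.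
    destruct (Req_dec_T (fr (y j)) f) as [Ht'|Ht']; auto.
    destruct (yint (y j) (r j)) as [Y [R0 [Hy [HR Hyr]]]]. rewrite HR in *.
    assert (IZR Y - IZR R0 - IZR k <= -1).
    { apply (zlem1 (Y - R0 - k)); [rewrite !minus_IZR; auto|lra]. }
    lra.
  - set (s := IZR k + (f + f') / 2).
    assert (Hs : 0 <= s <= INR L) by (specialize (HL ltac:(lra)); unfold s; lra).
    destruct (Hfe s Hs) as [j [Hj Hcov]]. exists j. split; auto.
    destruct (yint (y j) (r j)) as [Y [R0 [Hy [HR Hyr]]]]. rewrite HR in *.
    unfold s in Hcov.
    destruct (Req_dec_T (fr (y j)) f) as [Ht'|Ht'].
    + assert (IZR Y - IZR R0 - IZR k <= -1).
      { apply (zlem1 (Y - R0 - k)); [rewrite !minus_IZR; auto|lra]. }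
      assert (0 <= IZR Y + IZR R0 - IZR k).
      { apply (zge0 (Y + R0 - k)); [rewrite minus_IZR, plus_IZR; auto|lra]. }
      lra.
    + destruct (Hc j Hj) as [|Hphi]; [contradiction|].
      assert (1 <= IZR Y + IZR R0 - IZR k).
      { apply (zge1 (Y + R0 - k)); [rewrite minus_IZR, plus_IZR; auto|lra]. }
      assert (IZR Y - IZR R0 - IZR k <= 0).
      { apply (zle0 (Y - R0 - k)); [rewrite !minus_IZR; auto|lra]. }
      lra.
Qed.

Lemma down_feas n r L y f f' :
  0 <= f' < f -> f < 1 ->
  (forall i, (i < n)%nat -> fr (y i) = f \/ fr (y i) <= f') ->
  feasible n r L y ->
  feasible n r L (fun i => if Req_dec_T (fr (y i)) f then y i - (f - f') else y i).
Proof.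
  intros Hf Hf1 Hc Hfe t Ht.
  destruct (t_facts t L Ht) as [Hk [Htk [Hu HL]]].
  set (k := fl t) in *. set (u := fr t) in *.
  destruct (classic (f' < u <= f)) as [HB|HA].
  - set (s := IZR k + (1 + f) / 2).
    assert (Hs : 0 <= s <= INR L) by (specialize (HL ltac:(lra)); unfold s; lra).
    destruct (Hfe s Hs) as [j [Hj Hcov]]. exists j. split; auto.
    destruct (yint (y j) (r j)) as [Y [R0 [Hy [HR Hyr]]]]. rewrite HR in *.
    unfold s in Hcov.
    assert (Hphi : fr (y j) <= f) by (destruct (Hc j Hj); lra).
    assert (1 <= IZR Y + IZR R0 - IZR k).
    { apply (zge1 (Y + R0 - k)); [rewrite minus_IZR, plus_IZR; auto|lra]. }
    assert (IZR Y - IZR R0 - IZR k <= 0).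
    { apply (zle0 (Y - R0 - k)); [rewrite !minus_IZR; auto|lra]. }
    destruct (Req_dec_T (fr (y j)) f) as [Ht'|Ht'].
    + lra.
    + destruct (Hc j Hj) as [|Hphi']; [contradiction|]. lra.
  - destruct (Hfe t Ht) as [j [Hj Hcov]]. exists j. split; auto.
    destruct (Req_dec_T (fr (y j)) f) as [Ht'|Ht']; auto.
    destruct (yint (y j) (r j)) as [Y [R0 [Hy [HR Hyr]]]]. rewrite HR in *.
    destruct (Rle_dec u f').
    + assert (0 <= IZR Y + IZR R0 - IZR k).
      { apply (zge0 (Y + R0 - k)); [rewrite minus_IZR, plus_IZR; auto|lra]. }
      lra.
    + assert (1 <= IZR Y + IZR R0 - IZR k).
      { apply (zge1 (Y + R0 - k)); [rewrite minus_IZR, plus_IZR; auto|lra]. }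
      lra.
Qed.

Lemma cost_sum n x y : cost n x y = sumR 0 n (fun i => Rabs (y i - INR (x i))).
Proof. reflexivity. Qed.

Lemma round_main n r L x : forall k y l, (length l <= k)%nat -> feasible n r L y ->
  (forall i, (i < n)%nat -> fr (y i) = 0 \/ In (fr (y i)) l) ->
  exists y', feasible n r L y' /\ cost n x y' <= cost n x y /\
    forall i, (i < n)%nat -> fr (y' i) = 0.
Proof.
  induction k; intros y l Hl Hfe Hc.
  - destruct l; [|simpl in Hl; lia].
    exists y. split; [auto|split; [lra|]]. intros i Hi; destruct (Hc i Hi) as [|[]]; auto.
  - destruct (classic (forall i, (i < n)%nat -> fr (y i) = 0)) as [Hall|Hn].
    { exists y. split; [auto|split; [lra|auto]]. }
    apply not_all_ex_not in Hn. destruct Hn as [i0 Hi0].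
    apply imply_to_and in Hi0. destruct Hi0 as [Hi0n Hi0f].
    destruct (maxl (fun i => fr (y i)) n) as [f [Hf0 [Hfw Hfm]]].
    assert (Hfpos : 0 < f).
    { specialize (Hfm i0 Hi0n). destruct (fr_spec (y i0)) as [? _]. simpl in Hfm.
      destruct (Req_dec_T (fr (y i0)) 0); [contradiction|lra]. }
    destruct Hfw as [Hfw|[i1 [Hi1 Hi1f]]]; [lra|]. simpl in Hi1f.
    assert (Hf1 : f < 1) by (destruct (fr_spec (y i1)); lra).
    destruct (maxl (fun i => if Rlt_dec (fr (y i)) f then fr (y i) else 0) n)
      as [f' [Hf'0 [Hf'w Hf'm]]].
    assert (Hf'f : f' < f).
    { destruct Hf'w as [->|[j [Hj Hjf]]]; [lra|].
      destruct (Rlt_dec (fr (y j)) f); lra. }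
    assert (Hcls : forall i, (i < n)%nat -> fr (y i) = f \/ fr (y i) <= f').
    { intros i Hi. destruct (Req_dec_T (fr (y i)) f); [left; auto|right].
      specialize (Hfm i Hi). specialize (Hf'm i Hi). simpl in *.
      destruct (Rlt_dec (fr (y i)) f); lra. }
    assert (Hinl : In f l).
    { destruct (Hc i1 Hi1) as [H|H]; rewrite Hi1f in H; [lra|auto]. }
    set (l' := remove Req_dec_T f l).
    assert (Hlen : (length l' <= k)%nat).
    { pose proof (remove_length_lt Req_dec_T l f Hinl). unfold l'. lia. }
    assert (Hrest : forall i, (i < n)%nat -> fr (y i) <> f -> fr (y i) = 0 \/ In (fr (y i)) l').
    { intros i Hi Hne. destruct (Hc i Hi); [left; auto|right].
      apply in_in_remove; auto. }
    set (sig := fun i => if Req_dec_T (fr (y i)) f then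
                   (if Z_le_dec (Z.of_nat (x i)) (fl (y i)) then 1 else -1) else 0).
    destruct (Rle_dec (sumR 0 n sig) 0) as [HS|HS].
    + set (y1 := fun i => if Req_dec_T (fr (y i)) f then y i + (1 - f) else y i).
      assert (Hfe1 : feasible n r L y1) by (apply (up_feas n r L y f f'); auto; lra).
      assert (Hc1 : forall i, (i < n)%nat -> fr (y1 i) = 0 \/ In (fr (y1 i)) l').
      { intros i Hi. unfold y1. destruct (Req_dec_T (fr (y i)) f) as [E|E]; auto.
        left. destruct (fr_spec (y i)) as [_ Hv]. rewrite Hv, E.
        replace (IZR (fl (y i)) + f + (1 - f)) with (IZR (fl (y i) + 1) + 0)
          by (rewrite plus_IZR; ring).
        apply fr_uniq; lra. }
      assert (Hcost : cost n x y1 = cost n x y + sumR 0 n sig * (1 - f)).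
      { rewrite !cost_sum. apply sum_lin. intros i. unfold y1, sig.
        destruct (Req_dec_T (fr (y i)) f) as [E|E].
        - rewrite INR_IZR_INZ. apply up_term; auto.
        - ring. }
      destruct (IHk y1 l' Hlen Hfe1 Hc1) as [y2 [H1 [H2 H3]]].
      exists y2. split; auto. split; auto.
      assert (sumR 0 n sig * (1 - f) <= 0).
      { assert (0 <= 1 - f) by lra. nra. }
      lra.
    + set (y1 := fun i => if Req_dec_T (fr (y i)) f then y i - (f - f') else y i).
      assert (Hfe1 : feasible n r L y1) by (apply (down_feas n r L y f f'); auto; lra).
      assert (Hc1 : forall i, (i < n)%nat -> fr (y1 i) = 0 \/ In (fr (y1 i)) l').
      { intros i Hi. unfold y1. destruct (Req_dec_T (fr (y i)) f) as [E|E]; auto.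
        destruct (fr_spec (y i)) as [_ Hv]. rewrite Hv, E.
        replace (IZR (fl (y i)) + f - (f - f')) with (IZR (fl (y i)) + f')
          by ring.
        rewrite fr_uniq by lra.
        destruct Hf'w as [->|[j [Hj Hjf]]]; [left; auto|].
        destruct (Rlt_dec (fr (y j)) f) as [Hlt|Hlt]; [|left; auto].
        rewrite <- Hjf. apply Hrest; auto. lra. }
      assert (Hcost : cost n x y1 = cost n x y + sumR 0 n sig * (- (f - f'))).
      { rewrite !cost_sum. apply sum_lin. intros i. unfold y1, sig.
        destruct (Req_dec_T (fr (y i)) f) as [E|E].
        - rewrite INR_IZR_INZ. apply down_term; auto; lra.
        - ring. }
      destruct (IHk y1 l' Hlen Hfe1 Hc1) as [y2 [H1 [H2 H3]]].
      exists y2. split; auto. split; auto.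
      assert (sumR 0 n sig * (- (f - f')) <= 0).
      { assert (0 <= f - f') by lra. nra. }
      lra.
Qed.

Lemma round_all n r L x y : feasible n r L y ->
  exists y', feasible n r L y' /\ cost n x y' <= cost n x y /\
    forall i, (i < n)%nat -> fr (y' i) = 0.
Proof.
  intros Hfe.
  apply (round_main n r L x (length (map (fun i => fr (y i)) (seq 0 n))) y
           (map (fun i => fr (y i)) (seq 0 n))); auto.
  intros i Hi. right. apply (in_map (fun i => fr (y i))). apply in_seq. lia.
Qed.

Lemma int_cost n x y : (forall i, exists z : Z, y i = IZR z) -> exists N : nat, cost n x y = INR N.
Proof.
  intros H. rewrite cost_sum. apply (sumR_nat n 0). intros i.
  destruct (H i) as [z ->]. exists (Z.abs_nat (z - Z.of_nat (x i))).
  rewrite !INR_IZR_INZ, Nat2Z.inj_abs_nat, <- minus_IZR, Rabs_Zabs. reflexivity.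
Qed.

Lemma nat_min (P : nat -> Prop) : forall N, P N -> exists M, P M /\ forall K, P K -> (M <= K)%nat.
Proof.
  intros N. induction N as [N IH] using (well_founded_induction lt_wf). intros HN.
  destruct (classic (exists K, (K < N)%nat /\ P K)) as [[K [HK1 HK2]]|Hno].
  - apply (IH K HK1 HK2).
  - exists N. split; auto. intros K HK.
    destruct (Nat.lt_ge_cases K N); auto. exfalso; apply Hno; eauto.
Qed.

Theorem lemmaA1 (n : nat) (x r : nat -> nat) (L : nat) :
  (exists y0 : nat -> R, feasible n r L y0) ->
  exists y : nat -> R,
    feasible n r L y /\
    (forall y' : nat -> R, feasible n r L y' -> cost n x y <= cost n x y') /\
    (forall i : nat, (i < n)%nat -> exists z : Z, y i = IZR z).
Proof.
  intros [y0 H0].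
  set (P := fun N : nat => exists y, feasible n r L y /\
              (forall i, exists z : Z, y i = IZR z) /\ cost n x y = INR N).
  assert (Hint : forall y, feasible n r L y -> exists N, P N /\ INR N <= cost n x y).
  { intros y Hy. destruct (round_all n r L x y Hy) as [y1 [H1 [H2 H3]]].
    set (y2 := fun i => if Nat.ltb i n then y1 i else 0).
    assert (Hfe2 : feasible n r L y2).
    { intros t Ht. destruct (H1 t Ht) as [j [Hj Hc]]. exists j. split; auto.
      unfold y2. rewrite (proj2 (Nat.ltb_lt j n) Hj). auto. }
    assert (Hz : forall i, exists z : Z, y2 i = IZR z).
    { intros i. unfold y2. destruct (Nat.ltb_spec i n).
      - exists (fl (y1 i)). destruct (fr_spec (y1 i)) as [_ Hv]. rewrite (H3 i) in Hv; auto. lra.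
      - exists 0%Z. reflexivity. }
    assert (Hcs : cost n x y2 = cost n x y1).
    { rewrite !cost_sum. unfold sumR. apply f_equal. apply map_ext_in.
      intros i Hi. apply in_seq in Hi. unfold y2.
      rewrite (proj2 (Nat.ltb_lt i n)) by lia. reflexivity. }
    destruct (int_cost n x y2 Hz) as [N HN].
    exists N. split; [exists y2; auto|lra]. }
  destruct (Hint y0 H0) as [N0 [HP0 _]].
  destruct (nat_min P N0 HP0) as [M [[y [Hy1 [Hy2 Hy3]]] HM]].
  exists y. split; auto. split.
  - intros y' Hy'. destruct (Hint y' Hy') as [K [HK HK2]].
    specialize (HM K HK). apply le_INR in HM. lra.
  - intros i _. apply Hy2.
Qed.
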